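(* Let $(\mathfrak g,\Delta)$ be a perm coalgebra, $r=\sum r^1\otimes r^2\in\mathfrak g\otimes\mathfrak g$ symmetric with $$r^1{}_{(1)}\otimes r^1{}_{(2)}\otimes r^2+r^1{}_{(1)}\otimes r^2\otimes r^1{}_{(2)}-r^1{}_{(2)}\otimes r^2\otimes r^1{}_{(1)}-r^2\otimes r^1{}_{(2)}\otimes r^1{}_{(1)}=0$$ (i.e. $(\mathfrak g,\Delta,r)$ is a cosymplectic perm coalgebra), and $\omega\in(\mathfrak g\otimes\mathfrak g)^*$ symmetric. Assume (i) $\omega$ satisfies the classical co-perm Yang–Baxter equation in $(\mathfrak g,\Delta)$, so that $(\mathfrak g,\Delta,\omega,\cdot_\omega)$ is a dual quasitriangular perm bialgebra, and (ii) $r$ satisfies the classical perm Yang–Baxter equation in the algebra $(\mathfrak g,\cdot_\omega)$, so that $(\mathfrak g,\cdot_\omega,r,\Delta_r)$ (with $\Delta_r$ formed using $\cdot_\omega$) is a quasitriangular perm bialgebra. Then $S:\mathfrak g\to\mathfrak g$, $S(x)=r^1\omega(r^2,x)$, makes $(\mathfrak g,\Delta,S)$ a Nijenhuis perm coalgebra, i.e. for all $x$: $$S(x_{(1)})\otimes S(x_{(2)})+S^2(x)_{(1)}\otimes S^2(x)_{(2)}=S(S(x)_{(1)})\otimes S(x)_{(2)}+S(x)_{(1)}\otimes S(S(x)_{(2)}).$$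
   Context: Over a field $K$; Sweedler notation $\Delta(x)=x_{(1)}\otimes x_{(2)}$. A perm coalgebra $(\mathfrak g,\Delta)$: $x_{(1)(1)}\otimes x_{(1)(2)}\otimes x_{(2)}=x_{(1)}\otimes x_{(2)(1)}\otimes x_{(2)(2)}=x_{(1)}\otimes x_{(2)(2)}\otimes x_{(2)(1)}$. $\omega$ symmetric: $\omega(x,y)=\omega(y,x)$; $r$ symmetric: invariant under the flip. Classical co-perm Yang–Baxter equation in $(\mathfrak g,\Delta)$: $\omega(x_{(1)},z)\omega(x_{(2)},y)-\omega(x,z_{(1)})\omega(y,z_{(2)})+\omega(y_{(1)},z)\omega(x,y_{(2)})-\omega(x,y_{(1)})\omega(y_{(2)},z)=0$; $x\cdot_\omega y=x_{(1)}\omega(x_{(2)},y)+y_{(1)}\omega(x,y_{(2)})-y_{(2)}\omega(x,y_{(1)})$. For a product $\cdot$ and $r$ with second copy $\bar r$: classical perm Yang–Baxter equation $r^1\bar r^1\otimes\bar r^2\otimes r^2-r^1\otimes\bar r^1\otimes r^2\bar r^2+\bar r^1\otimes r^1\bar r^2\otimes r^2-r^1\otimes r^2\bar r^1\otimes\bar r^2=0$ (products taken in $\cdot$), and $\Delta_r(x)=x\cdot r^1\otimes r^2+r^1\otimes x\cdot r^2-r^1\otimes r^2\cdot x$. *)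

(* Defs.v *)
(* Finite-dimensional coordinate model: g = K^n with basis
   e_0..e_{n-1}; g⊗g and g⊗g⊗g are represented by their coefficient arrays. *)
From mathcomp Require Import all_boot all_order all_algebra.
Set Implicit Arguments. Unset Strict Implicit. Unset Printing Implicit Defensive.
Import GRing.Theory.
Local Open Scope ring_scope.

Section PermDefs.
Variables (K : fieldType) (n : nat).

Definition vec := 'I_n -> K.
Definition ten2 := 'I_n -> 'I_n -> K.
Definition ten3 := 'I_n -> 'I_n -> 'I_n -> K.

Definition ebase (i : 'I_n) : vec := fun k => (i == k)%:R.

(* coproduct given by structure constants: Δ(e_i) = Σ_{j,k} c i j k e_j ⊗ e_k *)
Definition coprod := 'I_n -> 'I_n -> 'I_n -> K.
Definition Delta (c : coprod) (x : vec) : ten2 :=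
  fun j k => \sum_(i < n) x i * c i j k.

Definition tmap (f g : vec -> vec) (t : ten2) : ten2 :=
  fun a b => \sum_(j < n) \sum_(k < n) t j k * f (ebase j) a * g (ebase k) b.

(* (Δ ⊗ id) Δ x : x_(1)(1) ⊗ x_(1)(2) ⊗ x_(2) *)
Definition DeltaL (c : coprod) (x : vec) : ten3 :=
  fun a b d => \sum_(j < n) Delta c x j d * c j a b.
(* (id ⊗ Δ) Δ x : x_(1) ⊗ x_(2)(1) ⊗ x_(2)(2) *)
Definition DeltaR (c : coprod) (x : vec) : ten3 :=
  fun a b d => \sum_(j < n) Delta c x a j * c j b d.

Definition perm_coalgebra (c : coprod) : Prop :=
  forall (x : vec) (a b d : 'I_n),
    DeltaL c x a b d = DeltaR c x a b d /\
    DeltaR c x a b d = DeltaR c x a d b.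

Definition symmetric2 (t : ten2) : Prop := forall i j, t i j = t j i.

(* bilinear form ω with matrix w i j = ω(e_i, e_j) *)
Definition omega (w : ten2) (x y : vec) : K :=
  \sum_(i < n) \sum_(j < n) x i * y j * w i j.

(* cosymplectic condition on r (r = Σ r i j e_i ⊗ e_j):
   r^1_(1)⊗r^1_(2)⊗r^2 + r^1_(1)⊗r^2⊗r^1_(2)
   - r^1_(2)⊗r^2⊗r^1_(1) - r^2⊗r^1_(2)⊗r^1_(1) = 0 *)
Definition rD (c : coprod) (r : ten2) : ten3 :=
  (* r^1_(1) ⊗ r^1_(2) ⊗ r^2 *)
  fun a b d => \sum_(i < n) r i d * c i a b.
Definition cosymplectic (c : coprod) (r : ten2) : Prop :=
  forall a b d : 'I_n,
    rD c r a b d + rD c r a d b - rD c r d a b - rD c r d b a = 0.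

Definition sumD (c : coprod) (x : vec) (f : 'I_n -> 'I_n -> K) : K :=
  (* Σ x_(1) ... x_(2) with x_(1) = e_j, x_(2) = e_k *)
  \sum_(j < n) \sum_(k < n) Delta c x j k * f j k.
Definition co_perm_YBE (c : coprod) (w : ten2) : Prop :=
  forall x y z : vec,
    sumD c x (fun j k => omega w (ebase j) z * omega w (ebase k) y)
  - sumD c z (fun j k => omega w x (ebase j) * omega w y (ebase k))
  + sumD c y (fun j k => omega w (ebase j) z * omega w x (ebase k))
  - sumD c y (fun j k => omega w x (ebase j) * omega w (ebase k) z) = 0.

(* x ·_ω y = x_(1) ω(x_(2), y) + y_(1) ω(x, y_(2)) - y_(2) ω(x, y_(1)) *)
Definition prod_omega (c : coprod) (w : ten2) (x y : vec) : vec :=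
  fun a => \sum_(k < n) Delta c x a k * omega w (ebase k) y
         + \sum_(k < n) Delta c y a k * omega w x (ebase k)
         - \sum_(k < n) Delta c y k a * omega w x (ebase k).

Definition perm_YBE (mul : vec -> vec -> vec) (r : ten2) : Prop :=
  forall a b d : 'I_n,
    (* r^1 rb^1 ⊗ rb^2 ⊗ r^2 *)
    \sum_(i < n) \sum_(k < n) r i d * r k b * mul (ebase i) (ebase k) a
    (* r^1 ⊗ rb^1 ⊗ r^2 rb^2 *)
  - \sum_(j < n) \sum_(l < n) r a j * r b l * mul (ebase j) (ebase l) d
    (* rb^1 ⊗ r^1 rb^2 ⊗ r^2 *)
  + \sum_(i < n) \sum_(l < n) r i d * r a l * mul (ebase i) (ebase l) b
    (* r^1 ⊗ r^2 rb^1 ⊗ rb^2 *)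
  - \sum_(j < n) \sum_(k < n) r a j * r k d * mul (ebase j) (ebase k) b = 0.

Definition Smap (r w : ten2) (x : vec) : vec :=
  fun a => \sum_(j < n) r a j * omega w (ebase j) x.

Definition nijenhuis_coalg (c : coprod) (S : vec -> vec) : Prop :=
  forall (x : vec) (a b : 'I_n),
    tmap S S (Delta c x) a b + Delta c (S (S x)) a b =
    tmap S id (Delta c (S x)) a b + tmap id S (Delta c (S x)) a b.

End PermDefs.

(* Main.v *)
Require Import Defs.
From mathcomp Require Import all_boot all_order all_algebra ring.
From Stdlib Require Import Setoid Morphisms.
Set Implicit Arguments. Unset Strict Implicit.
Import GRing.Theory.
Local Open Scope ring_scope.

#[local] Instance bigop_proper (R I : Type) (idx : R) (r : seq I) :
  Proper (pointwise_relation I eq ==> eq) (@bigop.body R I idx r).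
Proof.
move=> F G H; rewrite unlock /reducebig; elim: r => //= i r ->; by rewrite H.
Qed.

#[local] Instance bigbody_proper (R I : Type) (i : I) op (P : bool) :
  Proper (eq ==> eq) (@BigBody R I i op P).
Proof. by move=> x y ->. Qed.

Lemma sum_delta (K : fieldType) (n : nat) (j : 'I_n) (F : 'I_n -> K) :
  \sum_(k < n) (j == k)%:R * F k = F j.
Proof.
rewrite (bigD1 j) //= eqxx mul1r big1 ?addr0 // => k /negbTE.
by rewrite eq_sym => ->; rewrite mul0r.
Qed.

Lemma sum_delta' (K : fieldType) (n : nat) (j : 'I_n) (F : 'I_n -> K) :
  \sum_(k < n) F k * (k == j)%:R = F j.
Proof.
rewrite -[RHS](sum_delta j); apply: eq_bigr => k _; by rewrite mulrC eq_sym.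
Qed.

Lemma omega_e1 (K : fieldType) (n : nat) (w : ten2 K n) j (y : vec K n) :
  omega w (ebase _ j) y = \sum_(m < n) y m * w j m.
Proof.
rewrite /omega exchange_big; apply: eq_bigr => m _.
rewrite -[RHS](sum_delta j (fun i => y m * w i m)); apply: eq_bigr => i _.
by rewrite /ebase mulrA.
Qed.

Lemma omega_e2 (K : fieldType) (n : nat) (w : ten2 K n) (x : vec K n) k :
  omega w x (ebase _ k) = \sum_(i < n) x i * w i k.
Proof.
rewrite /omega; apply: eq_bigr => i _.
rewrite -[RHS](sum_delta' k (fun j => x i * w i j)); apply: eq_bigr => j _.
rewrite /ebase eq_sym; ring.
Qed.

Lemma omega_ee (K : fieldType) (n : nat) (w : ten2 K n) j k :
  omega w (ebase _ j) (ebase _ k) = w j k.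
Proof. by rewrite omega_e1 -(sum_delta k (w j)); apply: eq_bigr => m _; rewrite mulrC. Qed.

Definition Sm (K : fieldType) (n : nat) (r w : ten2 K n) (a j : 'I_n) : K :=
  \sum_(l < n) r a l * w l j.

Lemma Smap_e (K : fieldType) (n : nat) (r w : ten2 K n) j a :
  Smap r w (ebase _ j) a = Sm r w a j.
Proof. by rewrite /Smap /Sm; apply: eq_bigr => l _; rewrite omega_ee. Qed.

Lemma A1 (K : fieldType) (n : nat) (c : coprod K n) (r w : ten2 K n) x a b :
  tmap (Smap r w) (Smap r w) (Delta c x) a b =
  \sum_(i < n) x i * \sum_(j < n) \sum_(k < n) c i j k * Sm r w a j * Sm r w b k.
Proof.
rewrite /tmap /Delta.
under eq_bigr => j _ do under eq_bigr => k _ do rewrite !Smap_e !big_distrl.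
under [RHS]eq_bigr => i _ do rewrite big_distrr.
rewrite [RHS]exchange_big; apply: eq_bigr => j _.
under [RHS]eq_bigr => i _ do rewrite big_distrr.
rewrite [RHS]exchange_big; apply: eq_bigr => k _.
apply: eq_bigr => i _ /=; ring.
Qed.

Definition xi (K : fieldType) (n : nat) (w : ten2 K n) (x : vec K n) (q : 'I_n) : K :=
  \sum_(i < n) x i * w i q.

Lemma Smap_xi (K : fieldType) (n : nat) (r w : ten2 K n) y p :
  symmetric2 w -> Smap r w y p = \sum_(j < n) r p j * xi w y j.
Proof.
move=> sw; rewrite /Smap; apply: eq_bigr => j _; rewrite omega_e1 /xi.
by congr (_ * _); apply: eq_bigr => m _; rewrite sw.
Qed.

Lemma Delta_S (K : fieldType) (n : nat) (c : coprod K n) (r w : ten2 K n) y a b :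
  symmetric2 w ->
  Delta c (Smap r w y) a b = \sum_(q < n) xi w y q * rD c r a b q.
Proof.
move=> sw; rewrite /Delta /rD.
under eq_bigr => p _ do rewrite Smap_xi // big_distrl.
rewrite exchange_big; apply: eq_bigr => q _ /=.
rewrite big_distrr; apply: eq_bigr => p _ /=; ring.
Qed.

Lemma xi_S (K : fieldType) (n : nat) (r w : ten2 K n) y j :
  symmetric2 r -> symmetric2 w ->
  xi w (Smap r w y) j = \sum_(q < n) xi w y q * Sm r w q j.
Proof.
move=> sr sw; rewrite /xi /Sm.
under eq_bigr => m _ do rewrite Smap_xi // big_distrl.
rewrite exchange_big; apply: eq_bigr => q _ /=.
rewrite big_distrr; apply: eq_bigr => m _ /=; rewrite (sr q m) /xi; ring.
Qed.

Lemma A2 (K : fieldType) (n : nat) (c : coprod K n) (r w : ten2 K n) x a b :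
  symmetric2 r -> symmetric2 w ->
  Delta c (Smap r w (Smap r w x)) a b =
  \sum_(q < n) \sum_(m < n) xi w x q * Sm r w q m * rD c r a b m.
Proof.
move=> sr sw; rewrite Delta_S //.
under eq_bigr => m _ do rewrite xi_S // big_distrl.
rewrite exchange_big; apply: eq_bigr => q _; apply: eq_bigr => m _ /=; ring.
Qed.

Lemma A3 (K : fieldType) (n : nat) (c : coprod K n) (r w : ten2 K n) x a b :
  symmetric2 w ->
  tmap (Smap r w) id (Delta c (Smap r w x)) a b =
  \sum_(q < n) \sum_(m < n) xi w x q * Sm r w a m * rD c r m b q.
Proof.
move=> sw; rewrite /tmap.
under eq_bigr => j _ do rewrite (sum_delta' b (fun k => Delta c (Smap r w x) j k * Smap r w (ebase _ j) a)).
under eq_bigr => j _ do rewrite Delta_S // Smap_e big_distrl.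
rewrite exchange_big; apply: eq_bigr => q _; apply: eq_bigr => m _ /=; ring.
Qed.

Lemma A4 (K : fieldType) (n : nat) (c : coprod K n) (r w : ten2 K n) x a b :
  symmetric2 w ->
  tmap id (Smap r w) (Delta c (Smap r w x)) a b =
  \sum_(q < n) \sum_(m < n) xi w x q * Sm r w b m * rD c r a m q.
Proof.
move=> sw; rewrite /tmap exchange_big.
transitivity (\sum_(k < n) Delta c (Smap r w x) a k * Sm r w b k).
  apply: eq_bigr => k _.
  rewrite -(sum_delta' a (fun j => Delta c (Smap r w x) j k * Sm r w b k)).
  by apply: eq_bigr => j _; rewrite Smap_e /ebase /= eq_sym; ring.
under eq_bigr => k _ do rewrite Delta_S // big_distrl.
rewrite exchange_big; apply: eq_bigr => q _; apply: eq_bigr => m _ /=; ring.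
Qed.

Ltac norm := repeat (first [setoid_rewrite mulr_suml | setoid_rewrite mulr_sumr]).

Lemma s12 (K : fieldType) (n : nat) (F : 'I_n -> 'I_n -> 'I_n -> 'I_n -> K) :
  \sum_(a < n) \sum_(b < n) \sum_(c < n) \sum_(d < n) F a b c d =
  \sum_(b < n) \sum_(a < n) \sum_(c < n) \sum_(d < n) F a b c d.
Proof. exact: exchange_big. Qed.
Lemma s23 (K : fieldType) (n : nat) (F : 'I_n -> 'I_n -> 'I_n -> 'I_n -> K) :
  \sum_(a < n) \sum_(b < n) \sum_(c < n) \sum_(d < n) F a b c d =
  \sum_(a < n) \sum_(c < n) \sum_(b < n) \sum_(d < n) F a b c d.
Proof. apply: eq_bigr => a _; exact: exchange_big. Qed.
Lemma s34 (K : fieldType) (n : nat) (F : 'I_n -> 'I_n -> 'I_n -> 'I_n -> K) :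
  \sum_(a < n) \sum_(b < n) \sum_(c < n) \sum_(d < n) F a b c d =
  \sum_(a < n) \sum_(b < n) \sum_(d < n) \sum_(c < n) F a b c d.
Proof. apply: eq_bigr => a _; apply: eq_bigr => b _; exact: exchange_big. Qed.

Lemma YT2 (K : fieldType) (n : nat) (c : coprod K n) (r w : ten2 K n) i a b :
  symmetric2 r -> symmetric2 w ->
  \sum_(l < n) \sum_(m < n) r a m * r b l *
     (\sum_(j < n) \sum_(k < n) c m j k * (w i j * w l k))
  = \sum_(q < n) w i q * \sum_(m < n) Sm r w b m * rD c r q m a.
Proof.
move=> sr sw; rewrite /Sm /rD; norm.
rewrite [LHS]s23 [LHS]s12 [LHS]s34 [LHS]s23.
apply: eq_bigr => j _; apply: eq_bigr => k _; apply: eq_bigr => l _; apply: eq_bigr => m _.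
rewrite (sr a m); ring.
Qed.

Lemma YT1 (K : fieldType) (n : nat) (c : coprod K n) (r w : ten2 K n) i a b :
  symmetric2 r -> symmetric2 w ->
  \sum_(l < n) \sum_(m < n) r a m * r b l *
     (\sum_(j < n) \sum_(k < n) c i j k * (w j m * w k l))
  = \sum_(j < n) \sum_(k < n) c i j k * Sm r w a j * Sm r w b k.
Proof.
move=> sr sw; rewrite /Sm /rD; norm.
rewrite [LHS]s23 [LHS]s12 [LHS]s34 [LHS]s23.
apply: eq_bigr => j _; apply: eq_bigr => k _; apply: eq_bigr => l _; apply: eq_bigr => m _.
rewrite (sw j m) (sw k l); ring.
Qed.
Lemma YT3 (K : fieldType) (n : nat) (c : coprod K n) (r w : ten2 K n) i a b :
  symmetric2 r -> symmetric2 w ->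
  \sum_(l < n) \sum_(m < n) r a m * r b l *
     (\sum_(j < n) \sum_(k < n) c l j k * (w j m * w i k))
  = \sum_(q < n) w i q * \sum_(m < n) Sm r w a m * rD c r m q b.
Proof.
move=> sr sw; rewrite /Sm /rD; norm.
rewrite [LHS]s34 [LHS]s23 [LHS]s12 [LHS]s34 [LHS]s23 [LHS]s34.
apply: eq_bigr => j _; apply: eq_bigr => k _; apply: eq_bigr => l _; apply: eq_bigr => m _.
rewrite (sw k l) (sr b m); ring.
Qed.
Lemma YT4 (K : fieldType) (n : nat) (c : coprod K n) (r w : ten2 K n) i a b :
  symmetric2 r -> symmetric2 w ->
  \sum_(l < n) \sum_(m < n) r a m * r b l *
     (\sum_(j < n) \sum_(k < n) c l j k * (w i j * w k m))
  = \sum_(q < n) w i q * \sum_(m < n) Sm r w a m * rD c r q m b.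
Proof.
move=> sr sw; rewrite /Sm /rD; norm.
rewrite [LHS]s23 [LHS]s12 [LHS]s34 [LHS]s23 [LHS]s34.
apply: eq_bigr => j _; apply: eq_bigr => k _; apply: eq_bigr => l _; apply: eq_bigr => m _.
rewrite (sw k l) (sr b m); ring.
Qed.

Lemma Delta_e (K : fieldType) (n : nat) (c : coprod K n) i j k :
  Delta c (ebase _ i) j k = c i j k.
Proof. by rewrite /Delta (sum_delta i (fun p => c p j k)). Qed.

Lemma HYc (K : fieldType) (n : nat) (c : coprod K n) (w : ten2 K n) :
  co_perm_YBE c w -> forall i l m,
  \sum_(j < n) \sum_(k < n) c i j k * (w j m * w k l)
  - \sum_(j < n) \sum_(k < n) c m j k * (w i j * w l k)
  + \sum_(j < n) \sum_(k < n) c l j k * (w j m * w i k)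
  - \sum_(j < n) \sum_(k < n) c l j k * (w i j * w k m) = 0.
Proof.
move=> H i l m; have := H (ebase _ i) (ebase _ l) (ebase _ m).
rewrite /sumD; setoid_rewrite Delta_e; setoid_rewrite omega_ee; done.
Qed.

Lemma aux4 (K : fieldType) (a b c d : K) : a - b + c - d = 0 -> a = b - c + d.
Proof. by move=> h; apply/eqP; rewrite -subr_eq0 -h; apply/eqP; ring. Qed.

Lemma Ycontr (K : fieldType) (n : nat) (c : coprod K n) (r w : ten2 K n) i a b :
  symmetric2 r -> symmetric2 w -> co_perm_YBE c w ->
  \sum_(j < n) \sum_(k < n) c i j k * Sm r w a j * Sm r w b k =
  \sum_(q < n) w i q * \sum_(m < n) Sm r w b m * rD c r q m a
  - \sum_(q < n) w i q * \sum_(m < n) Sm r w a m * rD c r m q b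
  + \sum_(q < n) w i q * \sum_(m < n) Sm r w a m * rD c r q m b.
Proof.
move=> sr sw HY.
have E : \sum_(l < n) \sum_(m < n) r a m * r b l *
  (\sum_(j < n) \sum_(k < n) c i j k * (w j m * w k l)
  - \sum_(j < n) \sum_(k < n) c m j k * (w i j * w l k)
  + \sum_(j < n) \sum_(k < n) c l j k * (w j m * w i k)
  - \sum_(j < n) \sum_(k < n) c l j k * (w i j * w k m)) = 0.
  by apply: big1 => l _; apply: big1 => m _; rewrite HYc // mulr0.
rewrite -(@YT1 _ _ c r w i a b) -?(@YT2 _ _ c r w i a b) -?(@YT3 _ _ c r w i a b) -?(@YT4 _ _ c r w i a b) //.
apply: aux4; apply: (etrans _ E).
rewrite -!sumrB -!big_split -!sumrB; apply: eq_bigr => l _.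
rewrite -!sumrB -!big_split -!sumrB; apply: eq_bigr => m _ /=.
ring.
Qed.

Lemma t12 (K : fieldType) (n : nat) (F : 'I_n -> 'I_n -> 'I_n -> K) :
  \sum_(a < n) \sum_(b < n) \sum_(c < n) F a b c =
  \sum_(b < n) \sum_(a < n) \sum_(c < n) F a b c.
Proof. exact: exchange_big. Qed.
Lemma t23 (K : fieldType) (n : nat) (F : 'I_n -> 'I_n -> 'I_n -> K) :
  \sum_(a < n) \sum_(b < n) \sum_(c < n) F a b c =
  \sum_(a < n) \sum_(c < n) \sum_(b < n) F a b c.
Proof. apply: eq_bigr => a _; exact: exchange_big. Qed.

Ltac fixsym r sr :=
  repeat match goal with |- ?L = ?R =>
    match L with context[r ?x ?y] =>
      lazymatch R with
      | context[r x y] => fail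
      | context[r y x] => rewrite (sr x y)
      end
    end
  end.

Ltac fin3 r w sr sw :=
  apply: eq_bigr => ? _; apply: eq_bigr => ? _; apply: eq_bigr => ? _;
  fixsym r sr; fixsym w sw; ring.

Ltac solve3 r w sr sw :=
  first [ fin3 r w sr sw
        | rewrite [LHS]t12; fin3 r w sr sw
        | rewrite [LHS]t23; fin3 r w sr sw
        | rewrite [LHS]t12 [LHS]t23; fin3 r w sr sw
        | rewrite [LHS]t23 [LHS]t12; fin3 r w sr sw
        | rewrite [LHS]t12 [LHS]t23 [LHS]t12; fin3 r w sr sw ].

Definition mu (K : fieldType) (n : nat) (c : coprod K n) (w : ten2 K n) (i k a : 'I_n) : K :=
  \sum_(m < n) c i a m * w m k + \sum_(m < n) c k a m * w i m - \sum_(m < n) c k m a * w i m.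

Lemma mu_e (K : fieldType) (n : nat) (c : coprod K n) (w : ten2 K n) i k a :
  prod_omega c w (ebase _ i) (ebase _ k) a = mu c w i k a.
Proof. by rewrite /prod_omega /mu; setoid_rewrite Delta_e; setoid_rewrite omega_ee. Qed.

Lemma mDr (K : fieldType) (x y z : K) : x * (y + z) = x * y + x * z.
Proof. exact: mulrDr. Qed.
Lemma mNr (K : fieldType) (x y : K) : x * (- y) = - (x * y).
Proof. exact: mulrN. Qed.
Lemma bsplit (K : fieldType) (n : nat) (F G : 'I_n -> K) :
  \sum_(i < n) (F i + G i) = \sum_(i < n) F i + \sum_(i < n) G i.
Proof. exact: big_split. Qed.
Lemma bneg (K : fieldType) (n : nat) (F : 'I_n -> K) :
  \sum_(i < n) (- F i) = - \sum_(i < n) F i.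
Proof. exact: sumrN. Qed.

Lemma PT1 (K : fieldType) (n : nat) (c : coprod K n) (r w : ten2 K n) a b d :
  symmetric2 r -> symmetric2 w ->
  \sum_(i < n) \sum_(k < n) r i d * r k b * mu c w i k a =
  \sum_(m < n) (Sm r w b m * rD c r a m d + Sm r w d m * rD c r a m b
                - Sm r w d m * rD c r m a b).
Proof.
move=> sr sw; rewrite /mu.
repeat setoid_rewrite mDr; repeat setoid_rewrite mNr.
repeat setoid_rewrite bsplit; repeat setoid_rewrite bneg.
rewrite /Sm /rD; norm.
by congr (_ + _ - _); solve3 r w sr sw.
Qed.

Ltac ptsolve r w sr sw :=
  rewrite /mu;
  repeat setoid_rewrite mDr; repeat setoid_rewrite mNr;
  repeat setoid_rewrite bsplit; repeat setoid_rewrite bneg;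
  rewrite /Sm /rD; norm;
  by congr (_ + _ - _); solve3 r w sr sw.

Lemma PT2 (K : fieldType) (n : nat) (c : coprod K n) (r w : ten2 K n) a b d :
  symmetric2 r -> symmetric2 w ->
  \sum_(j < n) \sum_(l < n) r a j * r b l * mu c w j l d =
  \sum_(m < n) (Sm r w b m * rD c r d m a + Sm r w a m * rD c r d m b
                - Sm r w a m * rD c r m d b).
Proof. move=> sr sw; ptsolve r w sr sw. Qed.

Lemma PT3 (K : fieldType) (n : nat) (c : coprod K n) (r w : ten2 K n) a b d :
  symmetric2 r -> symmetric2 w ->
  \sum_(i < n) \sum_(l < n) r i d * r a l * mu c w i l b =
  \sum_(m < n) (Sm r w a m * rD c r b m d + Sm r w d m * rD c r b m a
                - Sm r w d m * rD c r m b a).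
Proof. move=> sr sw; ptsolve r w sr sw. Qed.

Lemma PT4 (K : fieldType) (n : nat) (c : coprod K n) (r w : ten2 K n) a b d :
  symmetric2 r -> symmetric2 w ->
  \sum_(j < n) \sum_(k < n) r a j * r k d * mu c w j k b =
  \sum_(m < n) (Sm r w d m * rD c r b m a + Sm r w a m * rD c r b m d
                - Sm r w a m * rD c r m b d).
Proof. move=> sr sw; ptsolve r w sr sw. Qed.

Definition Pm (K : fieldType) (n : nat) (c : coprod K n) (r w : ten2 K n) a b d m :=
  (Sm r w b m * rD c r a m d + Sm r w d m * rD c r a m b - Sm r w d m * rD c r m a b)
- (Sm r w b m * rD c r d m a + Sm r w a m * rD c r d m b - Sm r w a m * rD c r m d b)
+ (Sm r w a m * rD c r b m d + Sm r w d m * rD c r b m a - Sm r w d m * rD c r m b a)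
- (Sm r w d m * rD c r b m a + Sm r w a m * rD c r b m d - Sm r w a m * rD c r m b d).

Lemma Pzero (K : fieldType) (n : nat) (c : coprod K n) (r w : ten2 K n) a b d :
  symmetric2 r -> symmetric2 w -> perm_YBE (prod_omega c w) r ->
  \sum_(m < n) Pm c r w a b d m = 0.
Proof.
move=> sr sw HP; have := HP a b d.
setoid_rewrite mu_e.
rewrite PT1 // PT2 // PT3 // PT4 // => E; apply: (etrans _ E).
rewrite -!sumrB -!big_split -!sumrB; apply: eq_bigr => m _ /=; rewrite /Pm; ring.
Qed.

Lemma YX (K : fieldType) (n : nat) (c : coprod K n) (r w : ten2 K n) (x : vec K n) a b :
  symmetric2 r -> symmetric2 w -> co_perm_YBE c w ->
  \sum_(i < n) x i * \sum_(j < n) \sum_(k < n) c i j k * Sm r w a j * Sm r w b k =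
  \sum_(q < n) \sum_(m < n) xi w x q *
    (Sm r w b m * rD c r q m a - Sm r w a m * rD c r m q b + Sm r w a m * rD c r q m b).
Proof.
move=> sr sw HY.
under eq_bigr => i _ do rewrite Ycontr // -!sumrB -!big_split /=.
under eq_bigr => i _ do under eq_bigr => q _ do rewrite -!mulrBr -!mulrDr -!sumrB -!big_split /=.
rewrite /xi; norm.
rewrite [LHS]t12 [LHS]t23.
apply: eq_bigr => q _; apply: eq_bigr => m _; apply: eq_bigr => i _ /=; ring.
Qed.

Unset Implicit Arguments.

Theorem theorem3p13 (K : fieldType) (n : nat)
    (c : coprod K n) (r w : ten2 K n) :
  perm_coalgebra c ->
  symmetric2 r -> cosymplectic c r ->
  symmetric2 w ->
  co_perm_YBE c w ->
  perm_YBE (prod_omega c w) r ->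
  nijenhuis_coalg c (Smap r w).
Proof.
move=> _ sr HC sw HY HP x a b.
rewrite A1 A2 // A3 // A4 // YX //.
apply/eqP; rewrite -subr_eq0; apply/eqP.
transitivity (\sum_(q < n) \sum_(m < n) xi w x q *
   (Sm r w q m * (rD c r a b m + rD c r a m b - rD c r m a b - rD c r m b a)
    - Pm c r w a b q m)).
  rewrite -!big_split -!sumrB; apply: eq_bigr => q _.
  rewrite -!big_split -!sumrB; apply: eq_bigr => m _ /=.
  rewrite /Pm; ring.
apply: big1 => q _; rewrite -mulr_sumr sumrB Pzero // subr0.
by rewrite big1 ?mulr0 // => m _; rewrite HC mulr0.
Qed.
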